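(* Let $(X,d)$ be a compact metric space and $f_{0,\infty}=\{f_n\}_{n=0}^\infty$ a sequence of continuous self-maps of $X$. For $i\ge0$ let $f_{i,\infty}=\{f_n\}_{n=i}^\infty$. Then \[h^{*}(f_{i,\infty})\leq h^{*}(f_{j,\infty}),\quad 0\leq i\leq j<\infty.\]
   Context: $f_i^n=f_{i+n-1}\circ\cdots\circ f_i$ ($n\ge1$), $f_i^0=\mathrm{id}$, $f_i^{-n}(B)=(f_i^n)^{-1}(B)$. $\mathcal S$ is the set of strictly increasing sequences $A=\{a_k\}_{k\ge1}$ of nonnegative integers. The topological sequence entropy of $f_{i,\infty}$ along $A$ is $h_A(f_{i,\infty})=\sup_{\mathscr A}\limsup_{n\to\infty}\frac1n\log\mathcal N(\bigvee_{k=1}^n f_i^{-a_k}\mathscr A)$ over finite open covers $\mathscr A$ ($\bigvee$ = common refinement, $\mathcal N$ = minimal cardinality of a subcover), and $h^*(f_{i,\infty})=\sup_{A\in\mathcal S}h_A(f_{i,\infty})$. *)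

(* Defs.v *)
From HB Require Import structures.
From mathcomp Require Import all_boot all_order all_algebra.
From mathcomp Require Import all_classical all_reals all_analysis.
Set Implicit Arguments. Unset Strict Implicit. Unset Printing Implicit Defensive.
Import Order.TTheory GRing.Theory Num.Theory.
Local Open Scope classical_set_scope.
Local Open Scope ring_scope.

Section SeqEntropy.
Context {R : realType} {X : topologicalType}.

Fixpoint nacomp (f : nat -> X -> X) (i n : nat) : X -> X :=
  match n with
  | 0 => id
  | n'.+1 => fun x => f (i + n')%N (nacomp f i n' x)
  end.

Definition open_cover (A : seq (set X)) : Prop :=
  (forall U, U \in A -> open U) /\ (forall x : X, exists2 U, U \in A & U x).

(* common refinement  \/_{k=1}^n f_i^{-a_k} A   (a is indexed from 0:
   a 0, ..., a (n-1) stand for a_1, ..., a_n) *)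
Definition join_cover (f : nat -> X -> X) (i : nat) (a : nat -> nat)
    (A : seq (set X)) (n : nat) : set (set X) :=
  [set B | exists s : nat -> nat,
      (forall k, (k < n)%N -> (s k < size A)%N) /\
      B = \bigcap_(k in [set k | (k < n)%N]) (nacomp f i (a k) @^-1` nth set0 A (s k))].

Definition has_subcover_of_card (U : set (set X)) (m : nat) : Prop :=
  exists s : seq (set X), size s = m /\ (forall V, V \in s -> U V) /\
    (forall x : X, exists2 V, V \in s & V x).

(* N(U): minimal cardinality of a subcover (0 if there is no finite subcover) *)
Definition ncover (U : set (set X)) : nat :=
  match pselect (exists m, has_subcover_of_card U m) with
  | left H => ex_minn (P := fun m => `[< has_subcover_of_card U m >])
                (let: ex_intro m Hm := H in ex_intro _ m (asboolT Hm))
  | right _ => 0%N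
  end.

Definition strict_incr (a : nat -> nat) : Prop := forall m n, (m < n)%N -> (a m < a n)%N.

Definition seq_entropy (f : nat -> X -> X) (i : nat) (a : nat -> nat) : \bar R :=
  ereal_sup [set limn_esup (fun n : nat =>
                 ((ln (ncover (join_cover f i a A n))%:R : R) / n%:R)%:E)
            | A in open_cover].

Definition seq_entropy_star (f : nat -> X -> X) (i : nat) : \bar R :=
  ereal_sup [set seq_entropy f i a | a in strict_incr].

End SeqEntropy.

(* Main.v *)
Require Import Defs.
From HB Require Import structures.
From mathcomp Require Import all_boot all_order all_algebra.
From mathcomp Require Import all_classical all_reals all_analysis.
From mathcomp Require Import zify.
Import Order.TTheory GRing.Theory Num.Theory.
Local Open Scope classical_set_scope.

Lemma nacompS (X : topologicalType) (f : nat -> X -> X) i n x :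
  nacomp f i n.+1 x = nacomp f i.+1 n (f i x).
Proof.
elim: n => [|n IH] /=; first by rewrite addn0.
by rewrite -IH /= addSnnS.
Qed.

Lemma ncover_le (X : topologicalType) (U : set (set X)) (S : seq (set X)) :
  (forall x, exists2 W, W \in S & W x) ->
  (forall W, W \in S -> exists M, U M /\ W `<=` M) ->
  (ncover U <= size S)%N /\ has_subcover_of_card U (ncover U).
Proof.
move=> cov ref.
pose g W := if pselect (exists M, U M /\ W `<=` M) is left H
  then projT1 (cid H) else W.
have Hg W : W \in S -> U (g W) /\ W `<=` g W.
  move=> WS; rewrite /g; case: pselect => [H|nH]; last by exfalso; apply: nH; exact: ref.
  by case: (cid H).
have HS : has_subcover_of_card U (size S).
  exists (map g S); split; first by rewrite size_map.
  split.
    by move=> V /mapP [W WS ->]; case: (Hg W WS).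
  move=> x; have [W WS Wx] := cov x.
  by exists (g W); [exact: map_f | case: (Hg W WS) => _; apply].
rewrite /ncover; case: pselect => [P|nP]; last by exfalso; apply: nP; exists (size S).
case: ex_minnP => m Hm Hmin; split; last exact/asboolP.
by apply: Hmin; exact/asboolP.
Qed.

Lemma join_fin (X : topologicalType) f i a (A : seq (set X)) :
  (forall x, exists2 U, U \in A & U x) -> forall n,
  has_subcover_of_card (join_cover f i a A n) (ncover (join_cover f i a A n)).
Proof.
move=> cov n.
suff [S [covS refS]] : exists S : seq (set X), (forall x, exists2 W, W \in S & W x) /\
  (forall W, W \in S -> exists M, join_cover f i a A n M /\ W `<=` M).
  by case: (@ncover_le _ _ _ covS refS).
elim: n => [|n [S [covS refS]]].
  exists [:: setT]; split; first by move=> x; exists setT; rewrite ?inE.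
  move=> W; rewrite inE => /eqP ->.
  exists (\bigcap_(k in [set k | (k < 0)%N]) (nacomp f i (a k) @^-1` nth set0 A 0)).
  split; first by exists (fun=> 0%N); split.
  by move=> x _ k.
exists [seq V `&` (nacomp f i (a n) @^-1` nth set0 A t) | V <- S, t <- iota 0 (size A)].
split.
  move=> x; have [V VS Vx] := covS x.
  have [U UA Ux] := cov (nacomp f i (a n) x).
  exists (V `&` (nacomp f i (a n) @^-1` nth set0 A (index U A))).
    by apply: allpairs_f => //; rewrite mem_iota /= add0n index_mem.
  by split => //=; rewrite nth_index.
move=> W /allpairsP [[V t] [/= VS]]; rewrite mem_iota add0n => /andP [_ tA] ->.
have [M [[s [sA ->]] VM]] := refS V VS.
exists (\bigcap_(k in [set k | (k < n.+1)%N])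
   (nacomp f i (a k) @^-1` nth set0 A (if (k < n)%N then s k else t))).
split.
  exists (fun k => if (k < n)%N then s k else t); split => //.
  by move=> k _; case: ifP => // kn; exact: sA.
move=> x [Vx Tx] k /= kn; case: ifP => kn'.
  by have := VM x Vx k kn'.
by have -> : k = n by lia.
Qed.
Lemma join_shift (X : topologicalType) f i a (A : seq (set X)) n :
  strict_incr a -> (forall x, exists2 U, U \in A & U x) ->
  (ncover (join_cover f i a A n) <=
   size A * ncover (join_cover f i.+1 (fun k => (a k.+1).-1) A n))%N.
Proof.
move=> sa cov.
have [S [sizeS [SB covS]]] := @join_fin _ f i.+1 (fun k => (a k.+1).-1) A cov n.
rewrite -sizeS -(size_iota 0 (size A)) -(size_allpairs
  (fun t V => (nacomp f i (a 0%N) @^-1` nth set0 A t) `&` (f i @^-1` V))).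
apply: (proj1 (@ncover_le _ _ _ _ _)).
  move=> x; have [V VS Vx] := covS (f i x).
  have [U UA Ux] := cov (nacomp f i (a 0%N) x).
  exists ((nacomp f i (a 0%N) @^-1` nth set0 A (index U A)) `&` (f i @^-1` V)).
    by apply: allpairs_f => //; rewrite mem_iota /= add0n index_mem.
  by split => //=; rewrite nth_index.
move=> W /allpairsP [[t V] [/=]]; rewrite mem_iota add0n => /andP [_ tA] VS ->.
have [s [sA ->]] := SB V VS.
exists (\bigcap_(k in [set k | (k < n)%N])
   (nacomp f i (a k) @^-1` nth set0 A (if k is k'.+1 then s k' else t))).
split.
  exists (fun k => if k is k'.+1 then s k' else t); split => //.
  by move=> [|k] kn //; apply: sA; lia.
move=> x [Tx Vx] [|k] /= kn //.
have kn' : (k < n)%N by lia.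
have := Vx k kn'; rewrite /= -nacompS prednK //.
by apply: (leq_ltn_trans (leq0n (a 0%N))); apply: sa.
Qed.
Local Open Scope ring_scope.
Lemma limsup_le (R : realType) (u v : nat -> R) (c : R) : 0 <= c ->
  (forall n, 0 <= v n) -> (forall n, u n <= c / n%:R + v n) ->
  (limn_esup (fun n => (u n)%:E) <= limn_esup (fun n => (v n)%:E))%E.
Proof.
move=> c0 v0 uv.
rewrite /limn_esup [X in (_ <= X)%E]limf_esupE.
apply: le_ereal_inf_tmp => y [W HW <-].
have [N _ HN] := HW.
have vW n : (N <= n)%N -> ((v n)%:E <= ereal_sup ((fun n => (v n)%:E) @` W))%E.
  by move=> Nn; apply: ereal_sup_ubound; exists n => //; apply: HN.
case E: (ereal_sup _) vW => [r| |] vW; last first.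
- by have := vW N (leqnn N); rewrite leeNy_eq.
- exact: leey.
apply/lee_addgt0Pr => e e0.
pose M := (Num.truncn (c / e)).+1.
rewrite limf_esupE.
apply: (le_trans (ereal_inf_lbound _)).
  exists [set n | (maxn N M <= n)%N] => //.
  by exists (maxn N M).
apply: ge_ereal_sup => _ [n /= Hn <-].
rewrite -EFinD lee_fin addrC.
apply: (le_trans (uv n)); apply: lerD; last first.
  by have := vW n (leq_trans (leq_maxl N M) Hn); rewrite lee_fin.
have Mn : (M <= n)%N := leq_trans (leq_maxr N M) Hn.
have npos : 0 < n%:R :> R by rewrite ltr0n; apply: leq_trans Mn.
rewrite ler_pdivrMr // -ler_pdivrMl //.
rewrite mulrC; apply/ltW/(lt_le_trans (truncnS_gt _)).
by rewrite ler_nat.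
Qed.
Lemma ln_nat_ge0 (R : realType) (m : nat) : 0 <= ln (m%:R : R).
Proof. by case: m => [|m]; [rewrite ln0 | apply: ln_ge0; rewrite ler1n]. Qed.

Lemma ln_bound (R : realType) (p a b : nat) : (a <= p * b)%N ->
  ln (a%:R : R) <= ln (p%:R : R) + ln (b%:R : R).
Proof.
case: a => [|a] H; first by rewrite ln0 // addr_ge0 // ln_nat_ge0.
have : (0 < p * b)%N by apply: leq_trans H.
rewrite muln_gt0 => /andP [p0 b0].
rewrite -lnM ?posrE ?ltr0n // -natrM.
by rewrite ler_ln ?posrE ?ltr0n ?muln_gt0 ?p0 ?b0 // ler_nat.
Qed.

Lemma strict_shift (a : nat -> nat) : strict_incr a ->
  strict_incr (fun k => (a k.+1).-1).
Proof.
move=> sa m n mn.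
have h1 : (a m.+1 < a n.+1)%N by apply: sa.
have h2 : (a 0%N < a m.+1)%N by apply: sa.
lia.
Qed.

Lemma entropy_step (R : realType) (X : topologicalType) (f : nat -> X -> X) i a :
  strict_incr a ->
  (@seq_entropy R X f i a <= @seq_entropy R X f i.+1 (fun k => (a k.+1).-1))%E.
Proof.
move=> sa.
apply: ge_ereal_sup => _ [A HA <-].
apply: (le_trans _ (ereal_sup_ubound _)); last by exists A.
apply: (@limsup_le R _ _ (ln (size A)%:R)); first exact: ln_nat_ge0.
  by move=> n; apply: divr_ge0 => //; apply: ln_nat_ge0.
move=> n; rewrite -mulrDl; apply: ler_wpM2r; first by rewrite invr_ge0.
apply: ln_bound; apply: join_shift => //.
by case: HA.
Qed.

Lemma star_step (R : realType) (X : topologicalType) (f : nat -> X -> X) i :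
  (@seq_entropy_star R X f i <= @seq_entropy_star R X f i.+1)%E.
Proof.
apply: ge_ereal_sup => _ [a sa <-].
apply: (le_trans (@entropy_step R X f i a sa)).
apply: ereal_sup_ubound; exists (fun k => (a k.+1).-1) => //.
exact: strict_shift.
Qed.

Local Open Scope ereal_scope.

Theorem proposition4p5 (R : realType) (X : metricType R)
    (Xcpt : compact [set: X]) (f : nat -> X -> X)
    (fcont : forall n, continuous (f n)) (i j : nat) :
  (i <= j)%N ->
  @seq_entropy_star R X f i <= @seq_entropy_star R X f j.
Proof.
move=> /subnK <-; elim: (j - i)%N => [|d IH]; first by rewrite add0n.
by rewrite addSn; apply: (le_trans IH); apply: star_step.
Qed.
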